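(* For $i=1,2$ let $\mathbf{L}_i=(L_i,\le)$ be a nontrivial finite join-semilattice with greatest element $1$ satisfying property $( * )$, and let $(R_i,\vee,\circ)$ be a subsemiring of $(\mathrm{JM}_1(\mathbf{L}_i),\vee,\circ)$ such that $f_{a,b}\in R_i$ for all $a\in L_i\setminus\{1\}$, $b\in L_i$, and every $f\in R_i$ satisfies $f_{a,b}\le f$ for some $a\in L_i\setminus\{1\}$, $b\in L_i$. If $(R_1,\vee,\circ)$ and $(R_2,\vee,\circ)$ are isomorphic semirings, then $\mathbf{L}_1$ and $\mathbf{L}_2$ are isomorphic.
   Context: $\mathrm{JM}_1(\mathbf{L})$ is the set of maps $f:L\to L$ preserving binary joins with $f(1)=1$, a semiring under pointwise join and composition, ordered pointwise. $f_{a,b}(x)=b$ if $x\le a$ and $1$ otherwise. A finite semilattice with greatest element $1$ satisfies $( * )$ if there exists $u$ with $1\ne u\vee x$ for all $x\ne 1$. *)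

(* Defs.v *)
From HB Require Import structures.
From mathcomp Require Import all_boot all_order.
Set Implicit Arguments. Unset Strict Implicit. Unset Printing Implicit Defensive.
Import Order.TTheory.
Local Open Scope order_scope.

Section JM.
Variables (d : Order.disp_t) (L : finTJoinSemilatticeType d).

Definition fjoin (f g : {ffun L -> L}) : {ffun L -> L} := [ffun x => f x `|` g x].
Definition fcomp (f g : {ffun L -> L}) : {ffun L -> L} := [ffun x => f (g x)].
Definition fle (f g : {ffun L -> L}) : bool := [forall x, f x <= g x].

Definition JM1 (f : {ffun L -> L}) : Prop :=
  (forall x y, f (x `|` y) = f x `|` f y) /\ f \top = \top.

Definition fab (a b : L) : {ffun L -> L} := [ffun x => if x <= a then b else \top].

Definition star_prop : Prop :=
  exists u : L, forall x : L, x != \top -> u `|` x != \top.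

Definition subsemiring (R : {set {ffun L -> L}}) : Prop :=
  (forall f, f \in R -> JM1 f) /\
  (forall f g, f \in R -> g \in R -> fjoin f g \in R) /\
  (forall f g, f \in R -> g \in R -> fcomp f g \in R).

Definition good_R (R : {set {ffun L -> L}}) : Prop :=
  subsemiring R /\
  (forall a b : L, a != \top -> fab a b \in R) /\
  (forall f, f \in R -> exists a b : L, a != \top /\ fle (fab a b) f).

End JM.

Definition semiring_iso (d1 d2 : Order.disp_t)
  (L1 : finTJoinSemilatticeType d1) (L2 : finTJoinSemilatticeType d2)
  (R1 : {set {ffun L1 -> L1}}) (R2 : {set {ffun L2 -> L2}}) : Prop :=
  exists phi : {ffun L1 -> L1} -> {ffun L2 -> L2},
    [/\ {in R1 &, injective phi}, phi @: R1 = R2,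
        {in R1 &, forall f g, phi (fjoin f g) = fjoin (phi f) (phi g)} &
        {in R1 &, forall f g, phi (fcomp f g) = fcomp (phi f) (phi g)}].

Definition jsl_iso (d1 d2 : Order.disp_t)
  (L1 : finTJoinSemilatticeType d1) (L2 : finTJoinSemilatticeType d2) : Prop :=
  exists h : L1 -> L2, bijective h /\ forall x y, h (x `|` y) = h x `|` h y.

(* Main.v *)
Require Import Defs.
From HB Require Import structures.
From mathcomp Require Import all_boot all_order.
Set Implicit Arguments. Unset Strict Implicit. Unset Printing Implicit Defensive.
Import Order.TTheory.
Local Open Scope order_scope.

Lemma exists_ntop d (L : finTJoinSemilatticeType d) :
  (1 < #|L|)%N -> exists a : L, a != \top.
Proof.
move=> /card_gt1P [x [y [_ _ nxy]]].
case: (eqVneq x \top) => [ex|]; last by exists x.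
by exists y; rewrite -ex eq_sym.
Qed.

Lemma fab_comp d (L : finTJoinSemilatticeType d) (k : {ffun L -> L}) (a : L) :
  k \top = \top -> fcomp k (fab a a) = fab a (k a).
Proof.
move=> kt; apply/ffunP=> x; rewrite !ffunE.
by case: (x <= a).
Qed.

Lemma fab_join d (L : finTJoinSemilatticeType d) (a c c' : L) :
  fab a (c `|` c') = fjoin (fab a c) (fab a c').
Proof.
apply/ffunP=> x; rewrite !ffunE.
by case: (x <= a); rewrite ?joinxx.
Qed.

Lemma surj_lem d1 d2 (L1 : finTJoinSemilatticeType d1)
  (L2 : finTJoinSemilatticeType d2)
  (R1 : {set {ffun L1 -> L1}}) (R2 : {set {ffun L2 -> L2}})
  (phi : {ffun L1 -> L1} -> {ffun L2 -> L2}) :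
  (1 < #|L1|)%N -> good_R R1 -> good_R R2 ->
  {in R1 &, injective phi} -> phi @: R1 = R2 ->
  {in R1 &, forall f g, phi (fjoin f g) = fjoin (phi f) (phi g)} ->
  {in R1 &, forall f g, phi (fcomp f g) = fcomp (phi f) (phi g)} ->
  exists h : L1 -> L2, (forall y, exists x, h x = y) /\
     forall x y, h (x `|` y) = h x `|` h y.
Proof.
move=> c1 [[J1 _] [F1 _]] [[J2 _] [F2 _]] inj im hj hc.
have [a na] := exists_ntop c1.
have R1fab c : fab a c \in R1 by exact: F1.
have inR2 k : k \in R1 -> phi k \in R2 by move=> kR; rewrite -im; apply: imset_f.
have kt k : k \in R1 -> k \top = \top by move=> /J1 [].
have kt2 k : k \in R2 -> k \top = \top by move=> /J2 [].
set e2 := phi (fab a a).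
have e2R : e2 \in R2 by exact: inR2.
have [x0 nx0] : exists x0, e2 x0 != \top.
  case: (boolP [exists x, e2 x != \top]) => [/existsP // | /existsPn H].
  have H' x : e2 x = \top by have := H x; rewrite negbK => /eqP.
  have Ht : fcomp (phi (fab a \top)) e2 = e2.
    by apply/ffunP=> x; rewrite !ffunE H' kt2 ?inR2.
  have : phi (fab a \top) = phi (fab a a).
    rewrite -[RHS]Ht -/e2 -hc //.
    by rewrite fab_comp ?kt // ffunE lexx.
  move/inj => /(_ (R1fab _) (R1fab _)) /ffunP /(_ a).
  by rewrite !ffunE lexx => /esym/eqP; rewrite (negbTE na).
exists (fun c => phi (fab a c) x0); split.
  move=> y.
  have gR : fab (e2 x0) y \in R2 by exact: F2.
  move: gR; rewrite -im => /imsetP [k0 k0R gk0].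
  exists (k0 a).
  rewrite -fab_comp ?kt // hc // -gk0 ffunE ffunE lexx //.
move=> x y; rewrite fab_join hj // ffunE //.
Qed.

Lemma inv_iso d1 d2 (L1 : finTJoinSemilatticeType d1)
  (L2 : finTJoinSemilatticeType d2)
  (R1 : {set {ffun L1 -> L1}}) (R2 : {set {ffun L2 -> L2}}) :
  good_R R1 -> semiring_iso R1 R2 -> semiring_iso R2 R1.
Proof.
move=> [[_ [cj cc]] _] [phi [inj im hj hc]].
have inR2 k : k \in R1 -> phi k \in R2 by move=> kR; rewrite -im; apply: imset_f.
pose psi (f : {ffun L2 -> L2}) :=
  odflt [ffun x : L1 => x] [pick k in R1 | phi k == f].
have psiP f : f \in R2 -> psi f \in R1 /\ phi (psi f) = f.
  rewrite -im => /imsetP [k kR ->]; rewrite /psi.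
  case: pickP => [k' /andP [k'R /eqP ->] //|].
  by move=> /(_ k); rewrite kR eqxx.
have psiK k : k \in R1 -> psi (phi k) = k.
  move=> kR; have [pR pE] := psiP (phi k) (inR2 k kR).
  exact: inj.
exists psi; split.
- move=> f g fR gR E.
  by rewrite -(psiP f fR).2 -(psiP g gR).2 E.
- apply/setP=> k; apply/imsetP/idP.
    by move=> [f fR ->]; exact: (psiP f fR).1.
  by move=> kR; exists (phi k); [exact: inR2 | rewrite psiK].
- move=> f g fR gR.
  have [pf ef] := psiP f fR; have [pg eg] := psiP g gR.
  by rewrite -{1}ef -{1}eg -hj // psiK // cj.
- move=> f g fR gR.
  have [pf ef] := psiP f fR; have [pg eg] := psiP g gR.
  by rewrite -{1}ef -{1}eg -hc // psiK // cc.
Qed.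

Theorem proposition6p6 (d1 d2 : Order.disp_t)
  (L1 : finTJoinSemilatticeType d1) (L2 : finTJoinSemilatticeType d2)
  (R1 : {set {ffun L1 -> L1}}) (R2 : {set {ffun L2 -> L2}}) :
  (1 < #|L1|)%N -> (1 < #|L2|)%N ->
  star_prop L1 -> star_prop L2 ->
  good_R R1 -> good_R R2 ->
  semiring_iso R1 R2 ->
  jsl_iso L1 L2.
Proof.
move=> c1 c2 _ _ g1 g2 iso.
have iso' := inv_iso g1 iso.
have [phi [inj im hj hc]] := iso.
have [psi [inj' im' hj' hc']] := iso'.
have [h [hs hm]] := surj_lem c1 g1 g2 inj im hj hc.
have [h' [hs' _]] := surj_lem c2 g2 g1 inj' im' hj' hc'.
have card_le (T T' : finType) (f : T -> T') :
    (forall y, exists x, f x = y) -> (#|T'| <= #|[seq f x | x in T]|)%N.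
  move=> fs; apply: subset_leq_card; apply/subsetP=> y _.
  by have [x <-] := fs y; apply: image_f.
have le21 := leq_trans (card_le _ _ _ hs) (leq_image_card _ _).
have le12 := leq_trans (card_le _ _ _ hs') (leq_image_card _ _).
have hinj : injective h.
  have : #|[seq h x | x in L1]| == #|L1|.
    rewrite eqn_leq leq_image_card /=.
    exact: leq_trans le12 (card_le _ _ _ hs).
  by move/image_injP=> H x y; apply: H.
exists h; split => //.
exact: inj_card_bij hinj le21.
Qed.
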